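(* Let $(Q,\cdot)$ be a quasigroup. Then: (1) if $Q$ satisfies $x(y(zy))=(x(yz))y$ for all $x,y,z$ (LG3-quasigroup), then $Q$ is a right loop; (2) if $Q$ satisfies $(xx)(yz)=((xx)y)z$ for all $x,y,z$ (LNQ-quasigroup), then $Q$ is a left loop; (3) if $Q$ satisfies $x(y(yz))=(x(yy))z$ for all $x,y,z$ (LC4-quasigroup), then $Q$ is a right loop; (4) if $Q$ satisfies $x(y(xz))=(x(yx))z$ for all $x,y,z$ (left Bol quasigroup), then $Q$ is a right loop; (5) if $Q$ satisfies $x(xy)=(xx)y$ for all $x,y$ (left alternative quasigroup), then $Q$ is a left loop.
   Context: A quasigroup is a set $Q$ with a binary operation $\cdot$ (written as juxtaposition) such that for all $a,b\in Q$ each of the equations $ax=b$ and $ya=b$ has a unique solution in $Q$. A quasigroup $Q$ is a left loop if there is $e\in Q$ with $ea=a$ for all $a\in Q$, and a right loop if there is $e\in Q$ with $ae=a$ for all $a\in Q$. *)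

(* Defs.v *)
Definition is_quasigroup {Q : Type} (m : Q -> Q -> Q) : Prop :=
  forall a b : Q,
    (exists x, m a x = b /\ forall x', m a x' = b -> x' = x) /\
    (exists y, m y a = b /\ forall y', m y' a = b -> y' = y).

Definition left_loop {Q : Type} (m : Q -> Q -> Q) : Prop :=
  exists e : Q, forall a : Q, m e a = a.

Definition right_loop {Q : Type} (m : Q -> Q -> Q) : Prop :=
  exists e : Q, forall a : Q, m a e = a.

(* Main.v *)
Require Import Defs.

Theorem mainTheorem4 (Q : Type) (m : Q -> Q -> Q) (q0 : Q) (HQ : is_quasigroup m) :
  ((forall x y z, m x (m y (m z y)) = m (m x (m y z)) y) -> right_loop m) /\
  ((forall x y z, m (m x x) (m y z) = m (m (m x x) y) z) -> left_loop m) /\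
  ((forall x y z, m x (m y (m y z)) = m (m x (m y y)) z) -> right_loop m) /\
  ((forall x y z, m x (m y (m x z)) = m (m x (m y x)) z) -> right_loop m) /\
  ((forall x y, m x (m x y) = m (m x x) y) -> left_loop m).
Proof.
  assert (ldiv : forall a b, exists x, m a x = b).
  { intros a b. destruct (HQ a b) as [[x [Hx _]] _]. eauto. }
  assert (rdiv : forall a b, exists y, m y a = b).
  { intros a b. destruct (HQ a b) as [_ [y [Hy _]]]. eauto. }
  assert (lc : forall a x x', m a x = m a x' -> x = x').
  { intros a x x' E. destruct (HQ a (m a x)) as [[u [_ U]] _].
    rewrite (U x eq_refl), (U x' (eq_sym E)). reflexivity. }
  assert (rc : forall a x x', m x a = m x' a -> x = x').
  { intros a x x' E. destruct (HQ a (m x a)) as [_ [u [_ U]]].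
    rewrite (U x eq_refl), (U x' (eq_sym E)). reflexivity. }
  split; [|split; [|split; [|split]]]; intro H.
  - destruct (ldiv q0 q0) as [f Hf]. destruct (rdiv q0 f) as [z Hz].
    exists (m q0 z). intro a. apply (rc q0).
    rewrite <- H, Hz, Hf. reflexivity.
  - destruct (ldiv (m q0 q0) (m q0 q0)) as [e He].
    exists e. intro a. apply (lc (m q0 q0)). rewrite H, He. reflexivity.
  - destruct (ldiv q0 q0) as [z Hz]. exists z. intro a.
    destruct (rdiv (m q0 q0) a) as [b Hb]. subst a.
    rewrite <- H, Hz. reflexivity.
  - destruct (ldiv q0 q0) as [f Hf]. exists f. intro a.
    destruct (ldiv q0 a) as [c Hc]. destruct (rdiv q0 c) as [y Hy].
    rewrite <- Hc, <- Hy, <- H, Hf. reflexivity.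
  - destruct (rdiv q0 q0) as [e He].
    assert (Hee : m e e = e).
    { apply (rc q0). rewrite <- H, He, He. reflexivity. }
    exists e. intro a. apply (lc e). rewrite H, Hee. reflexivity.
Qed.
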